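(* Under the standing setup, if $s_1=\dots=s_n=\tfrac12$, then the Nash equilibrium of the zero-sum game in which Georgia chooses $g\in[0,\underline s]$ to minimize $f$ and Hank chooses $h\in[\overline s,1]$ to maximize $f$ is $(g^*,h^* )=(0,1)$.
   Context: Standing setup. Fix $n\in\mathbb N$ and $W=[w_{ij}]\in\mathbb R^{n\times n}$ with $w_{ij}\ge0$, $w_{ii}=0$. Let $\|W\|_\infty=\max_i\sum_j|w_{ij}|$, $\|W\|_1=\max_j\sum_i|w_{ij}|$, let $\lambda$ be the spectral radius of $W$, and assume there is $c\in\mathbb R^n$ with all entries positive and $W^\top c=\lambda c$. Fix $\beta\ge\gamma\ge0$ with $1-\max\{\|W\|_\infty,\|W\|_1\}>\max\{2\beta,4\gamma\}$. Fix $s\in[0,1]^n$, $\overline s=\max_is_i$, $\underline s=\min_is_i$. Set $\widehat c_i=c_i/\sum_jc_j$, $\widehat s=\sum_i\widehat c_is_i$, $\chi=\sum_i\widehat c_is_i\sum_jw_{ij}$. Define $$f(g,h)=\frac{(1-2\beta+(h-g)\gamma)\widehat s-\chi+(h+g)\beta+(g^2-h^2)\gamma}{1-\lambda+(g-h)\gamma}\,c^\top\mathbf 1$$ (the centrality-weighted steady state of the opinion dynamics with source opinions $g,h$). *)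

(* Defs.v *)
From HB Require Import structures.
From mathcomp Require Import all_boot all_order all_algebra.
Set Implicit Arguments. Unset Strict Implicit. Unset Printing Implicit Defensive.
Import Order.TTheory GRing.Theory Num.Theory.
Local Open Scope ring_scope.

Section Defs.
Variables (R : rcfType) (n : nat).

Definition normInf (W : 'M[R]_n) : R := \big[Num.max/0]_(i < n) \sum_(j < n) `|W i j|.
Definition norm1 (W : 'M[R]_n) : R := \big[Num.max/0]_(j < n) \sum_(i < n) `|W i j|.

(* a + b*i (a,b in R) is a complex eigenvalue of W: there is a nonzero complex
   vector x + i y with W (x + i y) = (a + i b)(x + i y). *)
Definition complex_eigenvalue (W : 'M[R]_n) (a b : R) : Prop :=
  exists x y : 'cV[R]_n, (x != 0 \/ y != 0) /\
    W *m x = a *: x - b *: y /\ W *m y = b *: x + a *: y.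

Definition spectral_radius (W : 'M[R]_n) (lam : R) : Prop :=
  0 <= lam /\
  (exists a b, complex_eigenvalue W a b /\ lam ^+ 2 = a ^+ 2 + b ^+ 2) /\
  (forall a b, complex_eigenvalue W a b -> a ^+ 2 + b ^+ 2 <= lam ^+ 2).

Definition s_max (s : 'I_n -> R) : R := \big[Num.max/0]_(i < n) s i.
Definition s_min (s : 'I_n -> R) : R := \big[Num.min/1]_(i < n) s i.

Definition c_sum (c : 'cV[R]_n) : R := \sum_(j < n) c j 0.
Definition c_hat (c : 'cV[R]_n) (i : 'I_n) : R := c i 0 / c_sum c.
Definition s_hat (c : 'cV[R]_n) (s : 'I_n -> R) : R := \sum_(i < n) c_hat c i * s i.
Definition chi (W : 'M[R]_n) (c : 'cV[R]_n) (s : 'I_n -> R) : R :=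
  \sum_(i < n) c_hat c i * s i * \sum_(j < n) W i j.

Definition f_ss (W : 'M[R]_n) (c : 'cV[R]_n) (lam beta gamma : R) (s : 'I_n -> R)
    (g h : R) : R :=
  ((1 - 2 * beta + (h - g) * gamma) * s_hat c s - chi W c s + (h + g) * beta
     + (g ^+ 2 - h ^+ 2) * gamma) / (1 - lam + (g - h) * gamma) * c_sum c.

End Defs.

Definition nash_equilibrium (R : realFieldType) (F : R -> R -> R)
    (glo ghi hlo hhi gs hs : R) : Prop :=
  [/\ glo <= gs <= ghi, hlo <= hs <= hhi,
      (forall g, glo <= g <= ghi -> F gs hs <= F g hs) &
      (forall h, hlo <= h <= hhi -> F gs h <= F gs hs)].

(* Main.v *)
Require Import Defs.
From HB Require Import structures.
From mathcomp Require Import all_boot all_order all_algebra.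
From mathcomp Require Import ring lra.
Import Order.TTheory GRing.Theory Num.Theory.
Local Open Scope ring_scope.

Lemma wsum_rows (R : rcfType) (n : nat) (W : 'M[R]_n) (lam : R) (c : 'cV[R]_n) :
  W^T *m c = lam *: c ->
  \sum_(i < n) c i 0 * \sum_(j < n) W i j = lam * c_sum c.
Proof.
move=> HW.
rewrite /c_sum mulr_sumr.
under eq_bigr do rewrite mulr_sumr.
rewrite exchange_big /=.
apply: eq_bigr => j _.
have := congr1 (fun M : 'cV[R]_n => M j 0) HW.
rewrite !mxE /= => <-.
by apply: eq_bigr => i _; rewrite !mxE mulrC.
Qed.

Theorem corollary3 (R : rcfType) (n : nat) (W : 'M[R]_n) (lam : R) (c : 'cV[R]_n)
    (beta gamma : R) (s : 'I_n -> R) :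
  (forall i j, 0 <= W i j) ->
  (forall i, W i i = 0) ->
  spectral_radius W lam ->
  (forall i, 0 < c i 0) ->
  W^T *m c = lam *: c ->
  gamma <= beta -> 0 <= gamma ->
  Num.max (2 * beta) (4 * gamma) < 1 - Num.max (normInf W) (norm1 W) ->
  (forall i, 0 <= s i <= 1) ->
  (forall i, s i = 1 / 2) ->
  nash_equilibrium (f_ss W c lam beta gamma s)
    0 (s_min s) (s_max s) 1 0 1.
Proof.
move=> W0 _ _ c0 HW gb g0 Hmax s01 shalf.
have smin01 : 0 <= s_min s <= 1.
  rewrite /s_min; apply: (big_rec (fun y => 0 <= y <= 1)); first by rewrite ler01 lexx.
  move=> i y _ /andP[y0 y1]; have /andP[a b] := s01 i.
  by rewrite /Num.min; case: ifP => _; apply/andP.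
have smax01 : 0 <= s_max s <= 1.
  rewrite /s_max; apply: (big_rec (fun y => 0 <= y <= 1)); first by rewrite lexx ler01.
  move=> i y _ /andP[y0 y1]; have /andP[a b] := s01 i.
  by rewrite /Num.max; case: ifP => _; apply/andP.
move: smin01 smax01 => /andP[m0 m1] /andP[M0 M1].
have Hb : 2 * beta < 1 - normInf W /\ 4 * gamma < 1 - normInf W.
  move: Hmax; rewrite !comparable_gt_max ?real_comparable ?num_real //.
  case/andP => h1 h2.
  have hm : normInf W <= Num.max (normInf W) (norm1 W) by rewrite le_max lexx.
  split; lra.
case: Hb => Hb1 Hb2.
have cs0 : 0 <= c_sum c by rewrite /c_sum; apply: sumr_ge0 => i _; apply: ltW.
have [cz|cp] := eqVneq (c_sum c) 0.
  have fz : forall g h, f_ss W c lam beta gamma s g h = 0.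
    by move=> g h; rewrite /f_ss cz mulr0.
  by split; rewrite ?lexx ?m0 ?M1 // => x _; rewrite !fz.
have cpos : 0 < c_sum c by rewrite lt_def cp cs0.
have Hsum := @wsum_rows R n W lam c HW.
have lamle : lam <= normInf W.
  have : lam * c_sum c <= normInf W * c_sum c.
    rewrite -Hsum /c_sum mulr_sumr; apply: ler_sum => i _.
    rewrite mulrC; apply: ler_wpM2r; first exact: ltW.
    have -> : \sum_(j < n) W i j = \sum_(j < n) `|W i j|.
      by apply: eq_bigr => j _; rewrite ger0_norm.
    rewrite /normInf; exact: le_bigmax.
  by rewrite ler_pM2r.
have shat : s_hat c s = 1/2.
  rewrite /s_hat; under eq_bigr do rewrite shalf.
  rewrite -mulr_suml /c_hat -mulr_suml -/(c_sum c) divff //; lra.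
have chiE : chi W c s = lam / 2.
  rewrite /chi; under eq_bigr do rewrite shalf /c_hat.
  rewrite (eq_bigr (fun i => (1/2 / c_sum c) * (c i 0 * \sum_(j < n) W i j))); last first.
    by move=> i _; field.
  rewrite -mulr_sumr Hsum; field; exact: cp.
have key : forall g h, 0 <= g <= 1 -> 0 <= h <= 1 ->
   0 < 1 - lam + (g - h) * gamma /\ f_ss W c lam beta gamma s g h = c_sum c * (1/2 + (h + g - 1) * (beta - (h - g) * gamma) / (1 - lam + (g - h) * gamma)).
  move=> g h /andP[gl gu] /andP[hl hu].
  have Dpos : 0 < 1 - lam + (g - h) * gamma.
    have : (g - h) * gamma >= - gamma by nra.
    move=> ?; lra.
  split => //.
  rewrite /f_ss shat chiE mulrC; congr (_ * _).
  have Dn : 1 - lam + (g - h) * gamma != 0 by rewrite gt_eqF.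
  field; exact: Dn.
split.
- by rewrite lexx m0.
- by rewrite M1 lexx.
- move=> g /andP[g0' g1].
  have g1' : g <= 1 by apply: le_trans m1.
  have [D1 ->] := key g 1 (ltac:(by rewrite g0' g1')) (ltac:(by rewrite ler01 lexx)).
  have [D2 ->] := key 0 1 (ltac:(by rewrite lexx ler01)) (ltac:(by rewrite ler01 lexx)).
  apply: ler_wpM2l => //.
  have t : 0 <= (1 + g - 1) * (beta - (1 - g) * gamma) / (1 - lam + (g - 1) * gamma).
    apply: divr_ge0; last exact: ltW.
    apply: mulr_ge0; first lra.
    have : (1 - g) * gamma <= gamma by nra.
    lra.
  have -> : (1 + 0 - 1) * (beta - (1 - 0) * gamma) / (1 - lam + (0 - 1) * gamma) = 0.
    by rewrite addr0 subrr !mul0r.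
  lra.
- move=> h /andP[h0 h1].
  have h0' : 0 <= h by apply: le_trans h0.
  have [D1 ->] := key 0 h (ltac:(by rewrite lexx ler01)) (ltac:(by rewrite h0' h1)).
  have [D2 ->] := key 0 1 (ltac:(by rewrite lexx ler01)) (ltac:(by rewrite ler01 lexx)).
  apply: ler_wpM2l => //.
  have t : (h + 0 - 1) * (beta - (h - 0) * gamma) / (1 - lam + (0 - h) * gamma) <= 0.
    apply: mulr_le0_ge0; last by rewrite invr_ge0; exact: ltW.
    apply: mulr_le0_ge0; first lra.
    have : (h - 0) * gamma <= gamma by nra.
    lra.
  have -> : (1 + 0 - 1) * (beta - (1 - 0) * gamma) / (1 - lam + (0 - 1) * gamma) = 0.
    by rewrite addr0 subrr !mul0r.
  lra.
Qed.
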